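(* Let $b$ be a prime and let $p$ be a prime of the form $p=bt+1$ with $t$ a positive integer and $b\nmid t$. Then $$g\Big(\tfrac{p^b-1}{b^2},\,p^b\Big)=b\,g(t,p).$$ In particular, if $b$ is an odd prime and $p=2b+1$ is prime, then $g\big(\tfrac{p^b-1}{b^2},p^b\big)=2b$.
   Context: For a prime power $q$ and a positive integer $k$, the Waring number $g(k,q)$ is the smallest $s$ (if it exists) such that every element of $\mathbb{F}_q$ is a sum of $s$ $k$-th powers of elements of $\mathbb{F}_q$. *)

(* Defs.v *)
From HB Require Import structures.
From mathcomp Require Import all_boot all_order all_algebra all_field.
Set Implicit Arguments. Unset Strict Implicit. Unset Printing Implicit Defensive.
Import GRing.Theory.
Local Open Scope ring_scope.

Definition sum_of_powers (F : finFieldType) (k s : nat) (x : F) : Prop :=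
  exists f : 'I_s -> F, x = \sum_(i < s) f i ^+ k.

Definition waring_ok (F : finFieldType) (k s : nat) : Prop :=
  forall x : F, sum_of_powers k s x.

(* [waring_number F k s] : s is the Waring number g(k, |F|), i.e. the smallest
   s such that every element of F is a sum of s k-th powers. *)
Definition waring_number (F : finFieldType) (k s : nat) : Prop :=
  waring_ok F k s /\ (forall s', waring_ok F k s' -> (s <= s')%N).

(* Main.v *)
Require Import Defs.
From HB Require Import structures.
From mathcomp Require Import all_boot all_order all_algebra all_field.
From mathcomp Require Import cyclic.
From mathcomp Require ring zify.
From Stdlib Require Classical_Prop Classical_Pred_Type.

Module MS1.
Set Implicit Arguments. Unset Strict Implicit. Unset Printing Implicit Defensive.
Import GRing.Theory.
Local Open Scope ring_scope.

Section SOP.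
Variables (F : finFieldType) (k : nat).

Lemma sop_add m n (x y : F) : sum_of_powers k m x -> sum_of_powers k n y ->
  sum_of_powers k (m + n) (x + y).
Proof.
move=> [f ->] [g ->].
exists (fun i : 'I_(m + n) => match split i with inl j => f j | inr j => g j end).
rewrite big_split_ord /=; congr (_ + _); apply: eq_bigr => i _.
  by rewrite -[lshift n i]/(unsplit (inl _ i)) unsplitK.
by rewrite -[rshift m i]/(unsplit (inr _ i)) unsplitK.
Qed.

Lemma sop0 : sum_of_powers k 0 (0 : F).
Proof. by exists (fun _ => 0); rewrite big_ord0. Qed.

Lemma sop1 (x : F) : sum_of_powers k 1 (x ^+ k).
Proof. by exists (fun _ => x); rewrite big_ord1. Qed.

Lemma sop_zero n : (0 < k)%N -> sum_of_powers k n (0 : F).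
Proof.
move=> k0; exists (fun _ => 0); rewrite big1 // => i _; by rewrite expr0n eqn0Ngt k0.
Qed.

Lemma sop_mono m n (x : F) : (0 < k)%N -> (m <= n)%N -> sum_of_powers k m x ->
  sum_of_powers k n x.
Proof.
move=> k0 mn h; rewrite -(subnKC mn) -[x]addr0; apply: sop_add => //.
exact: sop_zero.
Qed.

Lemma sop_seq (I : eqType) (s : seq I) (a : I -> F) :
  (forall i, exists y, a i = y ^+ k) ->
  sum_of_powers k (size s) (\sum_(i <- s) a i).
Proof.
move=> ha; elim: s => [|i s IH]; first by rewrite big_nil; exact: sop0.
rewrite big_cons /= -add1n; apply: sop_add => //.
by have [y ->] := ha i; exact: sop1.
Qed.

Lemma sop_set (I : finType) (A : pred I) (a : I -> F) :
  (forall i, exists y, a i = y ^+ k) ->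
  sum_of_powers k #|A| (\sum_(i in A) a i).
Proof.
move=> ha; rewrite -big_enum cardE; exact: sop_seq.
Qed.
End SOP.

Section SOP2.
Variables (F : finFieldType) (k : nat).

Lemma sop_ord n (a : 'I_n -> F) : (forall j, exists y, a j = y ^+ k) ->
  sum_of_powers k n (\sum_(j < n) a j).
Proof.
move=> ha; have [f hf] := fin_all_exists ha.
by exists f; apply: eq_bigr => j _.
Qed.

Lemma sop_sum m n (a : 'I_n -> F) : (forall i, sum_of_powers k m (a i)) ->
  sum_of_powers k (n * m) (\sum_(i < n) a i).
Proof.
elim: n a => [|n IH] a ha; first by rewrite big_ord0 mul0n; exact: sop0.
rewrite big_ord_recr mulSnr /=; apply: sop_add => //.
exact: (IH (fun i => a (widen_ord (leqnSn n) i))).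
Qed.
End SOP2.

Lemma ex_minP (P : nat -> Prop) n : P n ->
  exists m, P m /\ forall m', P m' -> (m <= m')%N.
Proof.
elim/ltn_ind: n => n IH Pn.
case: (Classical_Prop.classic (exists m, (m < n)%N /\ P m)) => [[m [mn Pm]]|H].
  exact: IH m mn Pm.
exists n; split => // m' Pm'; rewrite leqNgt; apply/negP => lt; apply: H.
by exists m'.
Qed.

End MS1.
Import MS1.

Module MS2.
Set Implicit Arguments. Unset Strict Implicit. Unset Printing Implicit Defensive.
Import GRing.Theory.
Local Open Scope ring_scope.

Lemma finfield_prim_root (K : finFieldType) :
  exists w : K, (#|K|.-1).-primitive_root w.
Proof.
set rs := enum [pred x : K | x != 0].
have szrs : size rs = #|K|.-1.
  by rewrite -cardE -(cardC1 0); apply: eq_card.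
have n0 : (0 < #|K|.-1)%N.
  by rewrite -szrs -has_predT; apply/hasP; exists 1; rewrite // mem_enum inE oner_neq0.
have : has (#|K|.-1).-primitive_root rs.
  apply: has_prim_root => //; last by rewrite szrs.
    apply/allP => x; rewrite mem_enum inE => x0.
    apply/unity_rootP; apply: (mulIf x0); rewrite mul1r -exprSr prednK ?expf_card //.
    exact: (ltn_trans _ (finNzRing_gt1 K)).
  exact: enum_uniq.
by case/hasP => w _ hw; exists w.
Qed.

Section Iota.
Variables (F : finFieldType) (p : nat).
Hypothesis pchF : p \in [pchar F].
Let pr_p : prime p := pcharf_prime pchF.

Definition embF (a : 'F_p) : F := (a : nat)%:R.

Lemma natmodF n : (n %% p)%:R = n%:R :> F.
Proof.
by rewrite [in RHS](divn_eq n p) natrD mulrnA (mulrn_pchar pchF) add0r.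
Qed.

Lemma iota_nat n : embF n%:R = n%:R.
Proof. by rewrite /embF val_Fp_nat // natmodF. Qed.

Lemma FpE (a : 'F_p) : a = (a : nat)%:R.
Proof. by rewrite natr_Zp. Qed.

Lemma iotaD a b : embF (a + b) = embF a + embF b.
Proof. by rewrite [a]FpE [b]FpE -natrD !iota_nat natrD. Qed.

Lemma iotaM a b : embF (a * b) = embF a * embF b.
Proof. by rewrite [a]FpE [b]FpE -natrM !iota_nat natrM. Qed.

Lemma iota0 : embF 0 = 0.
Proof. by have := iota_nat 0; rewrite !mulr0n. Qed.

Lemma iota1 : embF 1 = 1.
Proof. by have := iota_nat 1; rewrite !mulr1n. Qed.

Lemma iotaX a n : embF (a ^+ n) = embF a ^+ n.
Proof. by elim: n => [|n IH]; rewrite ?expr0 ?iota1 // !exprS iotaM IH. Qed.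

Lemma iota_sum (I : Type) (s : seq I) (P : pred I) (f : I -> 'F_p) :
  embF (\sum_(i <- s | P i) f i) = \sum_(i <- s | P i) embF (f i).
Proof. exact: (big_morph _ iotaD iota0). Qed.

Lemma ltFp (a : 'F_p) : (a < p)%N.
Proof. by rewrite -[X in (_ < X)%N](Fp_cast pr_p) ltn_ord. Qed.

Lemma iota_inj : injective embF.
Proof.
suff H : forall a b : 'F_p, (a <= b)%N -> embF a = embF b -> a = b.
  move=> a b; case: (leqP a b) => ab; first exact: H.
  by move=> e; symmetry; apply: H => //; apply: ltnW.
move=> a b ab; rewrite /embF => e.
have : (b - a)%:R == 0 :> F by rewrite natrB // e subrr.
rewrite -(dvdn_pcharf pchF) => /dvdnP[m hm].
have : (b - a < p)%N by apply: leq_ltn_trans (leq_subr a b) (ltFp b).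
rewrite hm; case: m hm => [|m] hm; last by rewrite mulSn ltnNge leq_addr.
move=> _; apply: val_inj; apply/eqP; rewrite eqn_leq ab /= -subn_eq0 hm.
by [].
Qed.

Lemma iota_frob a : embF a ^+ p = embF a.
Proof. by rewrite /embF -(pFrobenius_autE pchF) pFrobenius_aut_nat. Qed.

Lemma iota_fermat a : a != 0 -> embF a ^+ p.-1 = 1.
Proof.
move=> a0; have ia0 : embF a != 0 by apply: contra a0 => /eqP; rewrite -iota0 => /iota_inj ->.
apply: (mulIf ia0); rewrite mul1r -exprSr prednK ?iota_frob //; exact: prime_gt0.
Qed.
End Iota.

End MS2.
Import MS2.

Module MS3.
Import ring.
Set Implicit Arguments. Unset Strict Implicit. Unset Printing Implicit Defensive.

Lemma pow_form b t m : exists r, ((b * t).+1 ^ m = 1 + m * b * t + r * b ^ 2)%N.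
Proof.
elim: m => [|m [r IH]]; first by exists 0%N; rewrite expn0.
exists (m * t * t + r * (b * t).+1)%N; rewrite expnSr IH.
ring.
Qed.

Lemma dvd_qm1 b t : (b ^ 2 %| ((b * t).+1 ^ b).-1)%N.
Proof.
have [r ->] := pow_form b t b; apply/dvdnP; exists (t + r)%N.
rewrite add1n /=; ring.
Qed.

Lemma pow_inj b t i j : prime b -> ~~ (b %| t)%N -> (i < b)%N -> (j < b)%N ->
  ((b * t).+1 ^ i = (b * t).+1 ^ j %[mod b ^ 2])%N -> i = j.
Proof.
move=> pb bt.
wlog ij : i j / (i <= j)%N.
  move=> H ib jb e; case: (leqP i j) => h; first exact: H.
  by symmetry; apply: (H j i (ltnW h) jb ib); rewrite e.
move=> ib jb.
have [r1 ->] := pow_form b t i; have [r2 ->] := pow_form b t j.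
rewrite !(addnC _ (_ * b ^ 2)) !modnMDl => /eqP; rewrite eqn_modDl eq_sym eqn_mod_dvd; last first.
  by rewrite !leq_mul2r ij !orbT.
rewrite -!mulnA -mulnBl => /dvdnP[m hm].
have : (b %| (j - i) * t)%N.
  apply/dvdnP; exists m; have b0 : (0 < b)%N by exact: prime_gt0.
  apply/eqP; rewrite -(eqn_pmul2r b0); apply/eqP.
  rewrite -mulnA [(t * b)%N]mulnC hm /expn /=; ring.
rewrite Euclid_dvdM // (negbTE bt) orbF => /dvdn_leq.
move: ij; rewrite leq_eqVlt => /orP[/eqP -> //|h].
rewrite subn_gt0 h => /(_ isT) => hle.
have : (j - i < b)%N by apply: leq_ltn_trans (leq_subr i j) jb.
by rewrite ltnNge hle.
Qed.

End MS3.
Import MS3.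

Module MS4.
Set Implicit Arguments. Unset Strict Implicit. Unset Printing Implicit Defensive.
Import GRing.Theory.
Local Open Scope ring_scope.

Section Main.
Variables (b p t : nat) (F : finFieldType).
Hypotheses (pb : prime b) (pp : prime p) (t0 : (0 < t)%N) (hp : p = (b * t).+1)
  (bt : ~~ (b %| t)%N) (cF : #|F| = (p ^ b)%N).

Let pchF : p \in [pchar F] := card_finPcharP cF pp.
Let k := ((p ^ b).-1 %/ b ^ 2)%N.
Let b0 : (0 < b)%N := prime_gt0 pb.

Lemma hk : ((p ^ b).-1 = k * b ^ 2)%N.
Proof. by rewrite divnK // hp dvd_qm1. Qed.

Lemma k0 : (0 < k)%N.
Proof.
rewrite lt0n; apply/eqP => k_0; have := hk; rewrite k_0 mul0n => /eqP.
rewrite -subn1 subn_eq0 leqNgt => /negP; apply.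
by rewrite -{1}(expn0 p) ltn_exp2l ?prime_gt1.
Qed.

Let w := xchoose (finfield_prim_root F).
Let wP : (#|F|.-1).-primitive_root w := xchooseP (finfield_prim_root F).
Let z := w ^+ k.

Lemma zP : (b ^ 2).-primitive_root z.
Proof.
rewrite /z /k -cF; apply: (dvdn_prim_root wP).
by rewrite cF hp dvd_qm1.
Qed.

Let h := xchoose (finfield_prim_root 'F_p).
Let hP0 := xchooseP (finfield_prim_root 'F_p).

Lemma hP : (b * t).-primitive_root h.
Proof.
have e : (#|'F_p|.-1 = b * t)%N by rewrite card_Fp // hp.
rewrite -e; exact: hP0.
Qed.

Lemma kpow_root (y : F) : y ^+ (b ^ 2) = 1 -> exists x, y = x ^+ k.
Proof.
move=> /(prim_rootP zP) [i ->]; exists (w ^+ i); by rewrite /z exprAC.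
Qed.

Lemma kpow_char (x : F) : x != 0 -> (x ^+ k) ^+ (b ^ 2) = 1.
Proof.
move=> x0; rewrite -exprM -hk -cF.
apply: (mulIf x0); rewrite mul1r -exprSr prednK ?expf_card //.
exact: (ltn_trans _ (finNzRing_gt1 F)).
Qed.

Local Notation io := (@embF F p).
Let th := io h ^+ t.

Lemma thP : b.-primitive_root th.
Proof.
have thb : th ^+ b = 1.
  rewrite /th -exprM mulnC -iotaX // (prim_expr_order hP) iota1 //.
have [m pm mb] := prim_order_exists b0 thb.
case/primeP: pb => _ /(_ m mb) /orP[/eqP m1|/eqP mb']; last by rewrite -mb'.
move: pm; rewrite m1 => pm; have := prim_expr_order pm; rewrite expr1 /th -iotaX //.
rewrite -(iota1 pchF) => /(iota_inj pchF) /eqP; rewrite -(prim_order_dvd hP).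
move/dvdn_leq => /(_ t0); rewrite leqNgt -[X in (X < _)%N]mul1n ltn_mul2r t0 prime_gt1 //.
Qed.

Lemma mu_b (om : F) : om ^+ b = 1 -> exists e : 'F_p, om = io e ^+ t.
Proof.
move=> /(prim_rootP thP) [i ->]; exists (h ^+ i); by rewrite iotaX // exprAC.
Qed.

Lemma decomp (y : F) : y ^+ (b ^ 2) = 1 ->
  exists (i : 'I_b) (e : 'F_p), y = io e ^+ t * z ^+ i.
Proof.
move=> /(prim_rootP zP) [m ->].
have [e he] : exists e : 'F_p, (z ^+ b) ^+ (m %/ b) = io e ^+ t.
  apply: mu_b; rewrite -!exprM ?mulnA mulnAC -(mulnA k b b) mulnn !exprM; have zb := prim_expr_order zP; rewrite /z in zb; rewrite -(exprM (w ^+ k) b b) mulnn zb expr1n //.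
have mb : (m %% b < b)%N by apply: ltn_pmod.
exists (Ordinal mb), e; rewrite -he /= -exprM mulnC -exprD.
by rewrite -divn_eq.
Qed.

Lemma term_kpow (e : 'F_p) (i : nat) : exists x : F, io e ^+ t * z ^+ i = x ^+ k.
Proof.
have [->|e0] := eqVneq e 0.
  exists 0; rewrite iota0 // expr0n (negbTE (lt0n_neq0 t0)) mul0r expr0n.
  by rewrite (negbTE (lt0n_neq0 k0)).
have e1 : (p.-1 = b * t)%N by rewrite hp.
have f1 : io e ^+ (b * t) = 1 by rewrite -e1 iota_fermat.
have [x hx] : exists x, io e ^+ t * z ^+ i = x ^+ k; last by exists x.
apply: kpow_root; rewrite exprMn (exprAC z) (prim_expr_order zP) expr1n mulr1.
by rewrite -exprM -mulnn mulnA (mulnC t b) exprM f1 expr1n.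
Qed.

Definition Phi (c : {ffun 'I_b -> 'F_p}) : F := \sum_(i < b) io (c i) * z ^+ i.

Lemma Phi_inj : injective Phi.
Proof.
move=> c c' e.
pose a := fun i : 'I_b => io (c i) - io (c' i).
have aF i : a i ^+ p = a i.
  by rewrite /a -(pFrobenius_autE pchF) rmorphB /= !pFrobenius_autE !iota_frob.
have G0 : \sum_(i < b) a i * z ^+ i = 0.
  by rewrite /a; under eq_bigr do rewrite mulrBl; rewrite sumrB -/(Phi c) -/(Phi c') e subrr.
have Gj j : \sum_(i < b) a i * (z ^+ (p ^ j)) ^+ i = 0.
  elim: j => [|j IH]; first by rewrite expn0 expr1.
  rewrite expnSr exprM.
  transitivity ((\sum_(i < b) a i * (z ^+ (p ^ j)) ^+ i) ^+ p); last first.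
    by rewrite IH expr0n (negbTE (lt0n_neq0 (prime_gt0 pp))).
  rewrite -(pFrobenius_autE pchF (\sum_(i < b) _)) rmorph_sum; apply: eq_bigr => i _.
  by rewrite rmorphM rmorphXn /= !pFrobenius_autE aF exprAC.
pose Q := \sum_(i < b) a i *: 'X^i.
have QE x : Q.[x] = \sum_(i < b) a i * x ^+ i.
  by rewrite horner_sum; apply: eq_bigr => i _; rewrite hornerZ hornerXn.
have szQ : (size Q <= b)%N.
  apply: leq_trans (size_sum _ _ _) _; apply/bigmax_leqP => i _.
  by apply: leq_trans (size_scale_leq _ _) _; rewrite size_polyXn.
pose rs := [seq z ^+ (p ^ j) | j <- iota 0 b].
have Q0 : Q = 0.
  apply/eqP; apply: contraT => nz.
  have := max_poly_roots nz (rs := rs); rewrite size_map size_iota ltnNge szQ.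
  apply; first by apply/allP => x /mapP [j _ ->]; rewrite /root QE Gj.
  rewrite map_inj_in_uniq ?iota_uniq // => i j; rewrite !mem_iota !add0n => /andP[_ ib] /andP[_ jb].
  move/eqP; rewrite (eq_prim_root_expr zP) => /eqP; rewrite hp; exact: pow_inj.
apply/ffunP => j; apply: (iota_inj pchF); apply/eqP; rewrite -subr_eq0.
have : Q`_j = 0 by rewrite Q0 coef0.
rewrite coef_sumMXn (big_pred1 j) //.
by rewrite /a => ->.
Qed.

Lemma Phi_onto (x : F) : exists c, x = Phi c.
Proof.
have hc : (#|F| <= #|{ffun 'I_b -> 'F_p}|)%N by rewrite card_ffun card_Fp // card_ord cF.
by have /codomP [c ->] := inj_card_onto Phi_inj hc x; exists c.
Qed.

Lemma main_ok g : waring_ok 'F_p t g -> waring_ok F k (b * g).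
Proof.
move=> hg x; have [c ->] := Phi_onto x; rewrite /Phi; apply: sop_sum => i.
have [f ->] := hg (c i); rewrite iota_sum // mulr_suml; apply: sop_ord => j.
by rewrite iotaX //; exact: term_kpow.
Qed.

Lemma main_min g : waring_number 'F_p t g ->
  forall s, waring_ok F k s -> (b * g <= s)%N.
Proof.
move=> [_ gmin] s hs.
case: g gmin => [|g'] gmin; first by rewrite muln0.
have [c0 hc0] : exists c0 : 'F_p, ~ sum_of_powers t g' c0.
  apply: Classical_Pred_Type.not_all_ex_not => H.
  by have := gmin g' H; rewrite ltnn.
have [f hf] := hs (Phi [ffun _ => c0]).
have hdec j : exists (i : 'I_b) (e : 'F_p), f j ^+ k = io e ^+ t * z ^+ i.
  have [->|fj0] := eqVneq (f j) 0.
    exists (Ordinal b0), 0; rewrite iota0 // !expr0n (negbTE (lt0n_neq0 t0)).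
    by rewrite (negbTE (lt0n_neq0 k0)) mul0r.
  exact: decomp (kpow_char fj0).
have [I hI] := fin_all_exists hdec.
have [E hE] := fin_all_exists hI.
pose c' := [ffun i : 'I_b => \sum_(j < s | I j == i) E j ^+ t].
have eP : Phi [ffun _ => c0] = Phi c'.
  rewrite hf; under eq_bigr do rewrite hE.
  rewrite (partition_big I predT) //=; apply: eq_bigr => i _.
  rewrite ffunE iota_sum // mulr_suml; apply: eq_big => // j /eqP ->; rewrite iotaX //.
have hc := Phi_inj eP.
have hn i : (g'.+1 <= #|[pred j | I j == i]|)%N.
  rewrite ltnNge; apply/negP => le; apply: hc0.
  have e1 : c0 = \sum_(j in [pred j | I j == i]) E j ^+ t.
    by move/ffunP: hc => /(_ i); rewrite !ffunE => ->.
  rewrite e1; apply: (sop_mono t0 le); apply: sop_set => j; by exists (E j).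
have hs' : s = (\sum_(i < b) #|[pred j | I j == i]|)%N.
  rewrite -{1}(card_ord s) -sum1_card (partition_big I predT) //=.
  by apply: eq_bigr => i _; rewrite -sum1_card.
have -> : (b * g'.+1 = \sum_(i < b) g'.+1)%N by rewrite sum_nat_const card_ord.
rewrite hs'; apply: leq_sum => i _; exact: hn i.
Qed.
End Main.

End MS4.
Import MS4.

Module MS5.
Import zify.
Set Implicit Arguments. Unset Strict Implicit. Unset Printing Implicit Defensive.
Import GRing.Theory.
Local Open Scope ring_scope.

Lemma Fp_ok p t : prime p -> (0 < t)%N -> waring_ok 'F_p t p.
Proof.
move=> pp t0 a.
have ap : (a < p)%N by rewrite -[X in (_ < X)%N](Fp_cast pp) ltn_ord.
apply: (sop_mono t0 (ltnW ap)); exists (fun _ => 1).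
under eq_bigr do rewrite expr1n.
by rewrite sumr_const card_ord natr_Zp.
Qed.

Lemma waring_uniq (F : finFieldType) k m n :
  waring_number F k m -> waring_number F k n -> m = n.
Proof.
move=> [hm mm] [hn mn]; apply/eqP; rewrite eqn_leq mm // mn //.
Qed.

Section Squares.
Variables (b : nat).
Hypotheses (pb : prime b) (ob : odd b) (pp : prime (2 * b).+1).
Local Notation p := (2 * b).+1.

Lemma Fp_prim : exists h : 'F_p, (2 * b).-primitive_root h.
Proof. by have [w hw] := finfield_prim_root 'F_p; exists w; rewrite card_Fp in hw. Qed.
Let h := xchoose Fp_prim.
Let hP2 : (2 * b).-primitive_root h := xchooseP Fp_prim.

Lemma Fp_unit (x : 'F_p) : x != 0 -> x ^+ (2 * b) = 1.
Proof.
move=> x0; apply: (mulIf x0); rewrite mul1r -exprSr.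
by have := expf_card x; rewrite card_Fp.
Qed.

Lemma sq_ok : waring_ok 'F_p 2 2.
Proof.
have b0 : (0 < b)%N := prime_gt0 pb.
move=> a.
pose S := [set x ^+ 2 | x : 'F_p].
pose S1 := [set (h ^+ i) ^+ 2 | i : 'I_b].
have cS1 : #|S1| = b.
  rewrite card_imset ?card_ord // => i j /eqP.
  rewrite -!exprM (eq_prim_root_expr hP2) [(i * 2)%N]mulnC [(j * 2)%N]mulnC.
  rewrite /= -(eqn_pmul2l (isT : (0 < 2)%N)) -!muln_modr !modn_small //.
  by rewrite !eqn_pmul2l // => /eqP /val_inj.
have cS : (b.+1 <= #|S|)%N.
  have sub : 0 |: S1 \subset S.
    apply/subsetP => x; rewrite !inE => /orP[/eqP ->|/imsetP[i _ ->]].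
      by apply/imsetP; exists 0; rewrite ?inE // expr0n.
    by apply/imsetP; exists (h ^+ i).
  apply: leq_trans (subset_leq_card sub); rewrite cardsU1 cS1.
  case: (boolP (0 \in S1)) => [/imsetP[i _] /esym /eqP|//].
  rewrite expf_eq0 /= expf_eq0 (prim_root_eq0 hP2) muln_eq0 /=.
  by rewrite (negbTE (lt0n_neq0 b0)) andbF.
pose T := [set a - y | y in S].
have cT : #|T| = #|S|.
  by apply: card_imset => x y /eqP; rewrite (can2_eq (subKr a) (subKr a)) subKr => /eqP.
have : (0 < #|S :&: T|)%N.
  have h2 := cardsUI S T; have h1 := max_card (S :|: T).
  rewrite card_Fp // in h1; rewrite cT in h2; lia.
case/card_gt0P => y; rewrite inE => /andP[/imsetP[x1 _ ->] /imsetP[y2 /imsetP[x2 _ ->] e]].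
have -> : a = x1 ^+ 2 + x2 ^+ 2 by rewrite e subrK.
by apply: (@sop_add _ _ 1 1); exact: sop1.
Qed.

Lemma sq_min s : waring_ok 'F_p 2 s -> (2 <= s)%N.
Proof.
move=> hs; case: s hs => [|[|s]] hs //.
  by have [f] := hs 1; rewrite big_ord0 => /eqP; rewrite oner_eq0.
have [f] := hs h; rewrite big_ord1 => hf.
have h0 : h != 0 by rewrite (prim_root_eq0 hP2) muln_eq0 /= -lt0n prime_gt0.
have f0 : f ord0 != 0 by apply: contra h0 => /eqP f0; rewrite hf f0 expr0n.
have [i hi] := prim_rootP hP2 (Fp_unit f0).
move: hf; rewrite hi -exprM -{1}(expr1 h) => /eqP; rewrite (eq_prim_root_expr hP2).
rewrite [(i * 2)%N]mulnC -muln_modr modn_small; last by have := prime_gt0 pb; lia.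
by move/eqP/(congr1 odd); rewrite oddM.
Qed.

Lemma sq_waring : waring_number 'F_p 2 2.
Proof. by split; [exact: sq_ok | exact: sq_min]. Qed.
End Squares.

End MS5.
Import MS5.

Theorem mainTheorem9 :
  (forall (b p t : nat), prime b -> prime p -> (0 < t)%N -> p = (b * t).+1 ->
     ~~ (b %| t)%N ->
     forall F : finFieldType, #|F| = (p ^ b)%N ->
     exists g1 : nat,
       waring_number 'F_p t g1 /\
       waring_number F ((p ^ b).-1 %/ (b ^ 2))%N (b * g1)%N)
  /\
  (forall b : nat, prime b -> odd b -> prime (2 * b).+1 ->
     forall F : finFieldType, #|F| = (((2 * b).+1) ^ b)%N ->
     waring_number F ((((2 * b).+1) ^ b).-1 %/ (b ^ 2))%N (2 * b)%N).
Proof.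
have P1 : forall (b p t : nat), prime b -> prime p -> (0 < t)%N -> p = (b * t).+1 ->
     ~~ (b %| t)%N ->
     forall F : finFieldType, #|F| = (p ^ b)%N ->
     exists g1 : nat,
       waring_number 'F_p t g1 /\
       waring_number F ((p ^ b).-1 %/ (b ^ 2))%N (b * g1)%N.
  move=> b p t pb pp t0 hp bt F cF.
  have [g [hg gmin]] := ex_minP (Fp_ok pp t0).
  exists g; split; first by split.
  split; first exact: (main_ok pb pp t0 hp bt cF hg).
  exact: (main_min pb pp t0 hp bt cF (conj hg gmin)).
split => //.
move=> b pb ob pp F cF.
have b2 : ~~ (b %| 2)%N.
  apply/negP => /(dvdn_leq (isT : (0 < 2)%N)); rewrite leq_eqVlt => /orP[/eqP b2|].
    by move: ob; rewrite b2.
  by rewrite ltnS leqNgt prime_gt1.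
have [g1 [hg hF]] := P1 b _ 2 pb pp isT (esym (congr1 S (mulnC b 2))) b2 F cF.
rewrite (waring_uniq hg (sq_waring pb ob pp)) in hF.
have e : (b * 2 = 2 * b)%N := mulnC b 2.
by rewrite e in hF.
Qed.
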